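(* Each member of $\mathcal{G}_3$ is cycle-extendable.
   Context: A half biwheel is obtained from a path $P$ of even length (possibly a single vertex) with color classes $A,B$, whose ends $u,v$ lie in $A$, by adding a new vertex $h$ (the hub) adjacent to every vertex of $A$; $u,v$ are the corners (if $P$ is a single vertex the result is $K_2$ and $u=v$). $\mathcal{G}_3$ (hexagon half biwheels) consists of the graphs obtained from the disjoint union of a $6$-cycle $a_0a_1a_2a_3a_4a_5a_0$ and a half biwheel $H_1$ with hub $h_1$ and corners $u_1,v_1$ by adding the edges $h_1a_4$, $v_1a_1$, $a_3h_1$ and $a_0u_1$. A matching covered graph (connected, at least two vertices, every edge in a perfect matching) is cycle-extendable if for every even cycle $C$ the graph $G-V(C)$ has a perfect matching. *)

(* Defs.v *)
From mathcomp Require Import all_boot.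
Set Implicit Arguments. Unset Strict Implicit. Unset Printing Implicit Defensive.

(* A (simple) graph is given by its vertex type T : finType and an adjacency
   relation e : rel T (in_G3 below forces e to be symmetric and irreflexive). *)

Section Graphs.
Variable T : finType.
Variable e : rel T.

Definition perfect_matching_on (S : {set T}) (M : {set {set T}}) : bool :=
  [forall X in M, exists x, exists y,
      [&& X == [set x; y], x != y, x \in S, y \in S & e x y]]
  && [forall x in S, #|[set X in M | x \in X]| == 1].

Definition matching_covered : Prop :=
  [/\ 1 < #|T|,
      (forall x y : T, connect e x y) &
      (forall x y : T, e x y ->
         exists M, perfect_matching_on setT M /\ [set x; y] \in M)].

Definition even_cycle (s : seq T) : bool :=
  [&& uniq s, 2 < size s, cycle e s & ~~ odd (size s)].

Definition cycle_extendable : Prop :=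
  matching_covered /\
  forall s : seq T, even_cycle s ->
    exists M, perfect_matching_on (~: [set x in s]) M.

End Graphs.

(* The hexagon half biwheel with parameter k (path P of length 2k).
   Vertex numbering on 'I_(2k+8):
     0..5      = a_0 .. a_5 (the 6-cycle)
     6         = h_1 (hub)
     7 + i     = p_i, i = 0..2k, the path P = p_0 p_1 ... p_2k,
                 A = {p_i | i even}, u_1 = p_0, v_1 = p_2k. *)
Definition hexa_edge (k : nat) (x y : nat) : bool :=
  [|| (x < 6) && (y == (x + 1) %% 6),
      (x == 6) && (7 <= y) && ~~ odd (y - 7),
      (7 <= x) && (y == x + 1),
      (x == 6) && (y == 4),
      (x == 7 + 2 * k) && (y == 1),
      (x == 3) && (y == 6)
    | (x == 0) && (y == 7)].

Definition hexa (k : nat) : rel 'I_(2 * k + 8) :=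
  fun x y => hexa_edge k x y || hexa_edge k y x.

Definition in_G3 (T : finType) (e : rel T) : Prop :=
  exists k (f : 'I_(2 * k + 8) -> T),
    bijective f /\ forall x y, e (f x) (f y) = @hexa k x y.

(* Main.v *)
Require Import Defs.
From mathcomp Require Import all_boot zify.
Set Implicit Arguments. Unset Strict Implicit. Unset Printing Implicit Defensive.

Section Generic.
Variables (T : finType) (e : rel T).

Definition partner_on (S : {set T}) (m : T -> T) :=
  forall x, x \in S -> [/\ m x \in S, m x != x, e x (m x) & m (m x) = x].

Lemma pm_of_partner S m : partner_on S m ->
  exists M, perfect_matching_on e S M /\ forall x, x \in S -> [set x; m x] \in M.
Proof.
move=> Hm; exists [set [set x; m x] | x in S]; split; last first.
  by move=> x xS; apply/imsetP; exists x.
apply/andP; split.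
  apply/forallP => X; apply/implyP => /imsetP [x xS ->].
  have [H1 H2 H3 _] := Hm x xS.
  by apply/existsP; exists x; apply/existsP; exists (m x); rewrite eqxx eq_sym H2 xS H1 H3.
apply/forallP => x; apply/implyP => xS.
have [H1 H2 H3 H4] := Hm x xS.
apply/eqP; rewrite (_ : [set X in _ | _] = [set [set x; m x]]) ?cards1 //.
apply/setP => X; rewrite !inE; apply/andP/eqP.
  case=> /imsetP [y yS ->]; rewrite !inE => /orP [/eqP ->|/eqP ->] //.
  have [_ _ _ H5] := Hm y yS; by rewrite H5 setUC.
move=> ->; rewrite !inE eqxx; split => //; apply/imsetP; by exists x.
Qed.

End Generic.

Section Transport.
Variables (T : finType) (e : rel T) (k : nat) (f : 'I_(2 * k + 8) -> T) (g : T -> 'I_(2 * k + 8)).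
Hypotheses (fK : cancel f g) (gK : cancel g f) (hom : forall x y, e (f x) (f y) = @hexa k x y).

Lemma eE x y : e x y = @hexa k (g x) (g y).
Proof. by rewrite -hom !gK. Qed.

Lemma partner_tr (S' : {set 'I_(2 * k + 8)}) (S : {set T}) m :
  (forall z, (z \in S) = (g z \in S')) -> partner_on (@hexa k) S' m ->
  partner_on e S (fun z => f (m (g z))).
Proof.
move=> HS Hm z; rewrite HS => zS; have [H1 H2 H3 H4] := Hm _ zS.
split.
- by rewrite HS fK.
- by apply: contra H2 => /eqP H; rewrite -{2}H fK.
- by rewrite eE fK.
- by rewrite fK H4 gK.
Qed.

Lemma transport :
  (forall x y, connect (@hexa k) x y) ->
  (forall x y, @hexa k x y -> exists m, partner_on (@hexa k) setT m /\ m x = y) ->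
  (forall s, even_cycle (@hexa k) s -> exists m, partner_on (@hexa k) (~: [set x in s]) m) ->
  cycle_extendable e.
Proof.
move=> Hc Hcov Hext; split; first split.
- apply: leq_trans (leq_card _ (can_inj fK)); rewrite card_ord; lia.
- move=> x y; have /connectP [p Hp Hl] := Hc (g x) (g y).
  apply/connectP; exists (map f p); last by rewrite -[x in last x _](gK x) last_map -Hl gK.
  rewrite -{1}(gK x) path_map; apply: sub_path Hp => a b /=; by rewrite hom.
- move=> x y; rewrite eE => /Hcov [m [Hm Hxy]].
  have HS : forall z, (z \in [set: T]) = (g z \in [set: 'I_(2 * k + 8)]) by move=> z; rewrite !inE.
  have Hm' := partner_tr HS Hm.
  have [M [HM HM2]] := pm_of_partner Hm'; exists M; split => //.
  by have := HM2 x (in_setT x); rewrite Hxy gK.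
- move=> s /and4P [Us Ss Cs Es].
  have [|m Hm] := Hext (map g s).
    apply/and4P; split; rewrite ?size_map //.
      by rewrite map_inj_uniq //; apply: can_inj gK.
    rewrite cycle_map; apply: sub_cycle Cs => a b /=; by rewrite eE.
  have HS : forall z, (z \in ~: [set x in s]) = (g z \in ~: [set x in map g s]).
    by move=> z; rewrite !inE mem_map //; apply: can_inj gK.
  have Hm' := partner_tr HS Hm.
  have [M [HM _]] := pm_of_partner Hm'; by exists M.
Qed.
End Transport.

Ltac noif c := lazymatch c with context[if _ then _ else _] => fail | _ => idtac end.
Ltac ifs := repeat match goal with |- context[if ?c then _ else _] => noif c;
   first [ rewrite (_ : c = true); [|lia] | rewrite (_ : c = false); [|lia] | case: (boolP c) => ? ] end.

Ltac endestr H := repeat (destruct H as [H|H]).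
Ltac orlia := lazymatch goal with |- is_true (_ || _) => apply/orP; first [left; orlia | right; orlia] | _ => lia end.
Section Hexa.
Variable k : nat.
Notation N := (2 * k + 8).
Lemma Npos : 0 < N. Proof. lia. Qed.
Definition vI (x : nat) : 'I_N := Ordinal (ltn_pmod x Npos).
Lemma vIE x : x < N -> val (vI x) = x.
Proof. by move=> H; rewrite /= modn_small. Qed.
Lemma vIK (x : 'I_N) : vI x = x.
Proof. by apply: val_inj; rewrite vIE. Qed.

Definition En x y := hexa_edge k x y || hexa_edge k y x.

Lemma partner_nat (inS : pred nat) (F : nat -> nat) :
  (forall x, x < N -> inS x -> [/\ F x < N, inS (F x), F x != x, En x (F x) & F (F x) = x]) ->
  partner_on (@hexa k) [set x : 'I_N | inS x] (fun x => vI (F x)).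
Proof.
move=> H x; rewrite inE => xS; have [H1 H2 H3 H4 H5] := H x (ltn_ord x) xS.
split.
- by rewrite inE vIE.
- by apply: contra H3 => /eqP /(congr1 val); rewrite vIE // => ->.
- by rewrite /hexa vIE.
- by apply: val_inj; rewrite !vIE // H5.
Qed.

Definition EnP x y :=
 (x < 6 /\ y < 6 /\ (y = x.+1 \/ x = y.+1 \/ (x = 0 /\ y = 5) \/ (x = 5 /\ y = 0)))
 \/ (x = 6 /\ 7 <= y /\ ~~ odd (y-7)) \/ (y = 6 /\ 7 <= x /\ ~~ odd (x-7))
 \/ (7 <= x /\ y = x.+1) \/ (7 <= y /\ x = y.+1)
 \/ (x = 6/\y = 4) \/ (x = 4/\y = 6) \/ (x = 7+2*k/\y = 1) \/ (x = 1/\y = 7+2*k) \/ (x = 3/\y = 6) \/ (x = 6/\y = 3) \/ (x = 0/\y = 7) \/ (x = 7/\y = 0).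
Lemma En_cases x y : En x y -> EnP x y.
Proof.
rewrite /En /hexa_edge /EnP => /orP [] H.
- case/or4P: H => [H|H|H|/or4P [H|H|H|H]].
  + left; move/andP: H => [H1 /eqP H2]. rewrite H2. lia.
  + do 1 right; left. lia.
  + do 3 right; left. lia.
  + do 5 right; left. lia.
  + do 7 right; left. lia.
  + do 9 right; left. lia.
  + do 11 right; left. lia.
- case/or4P: H => [H|H|H|/or4P [H|H|H|H]].
  + left; move/andP: H => [H1 /eqP H2]. rewrite H2. lia.
  + do 2 right; left. lia.
  + do 4 right. lia.
  + do 6 right; left. lia.
  + do 8 right; left. lia.
  + do 10 right; left. lia.
  + do 12 right. lia.
Qed.

Definition Fgen (q : nat -> nat) (i j : nat) (x : nat) :=
  if x < 7 then q x
  else if x - 7 < i then (if odd (x - 7) then x - 1 else x + 1)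
  else if j < x - 7 then (if odd (x - 7) then x + 1 else x - 1)
  else q x.

Definition qcov (b : bool) (j : nat) (x : nat) :=
  if x == 6 then 7 + j else if 6 < x then 6 else
  if b then (if x == 0 then 1 else if x == 1 then 0 else if x == 2 then 3 else if x == 3 then 2 else if x == 4 then 5 else 4)
  else (if x == 0 then 5 else if x == 1 then 2 else if x == 2 then 1 else if x == 3 then 4 else if x == 4 then 3 else 0).

Definition pmok (cf : nat -> bool) (F : nat -> nat) := forall x, x < N -> ~~ cf x ->
  [/\ F x < N, ~~ cf (F x), F x != x, En x (F x) & F (F x) = x].

Ltac pmt := rewrite /Fgen; ifs; (split; [lia|lia|lia| rewrite /En /hexa_edge; orlia |lia]).

Lemma pm_cov b j : ~~ odd j -> j <= 2 * k -> pmok (fun _ => false) (Fgen (qcov b j) j j).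
Proof. move=> Hj Hj' x Hx _; rewrite /qcov; case: b; pmt. Qed.

Definition qa0 x := if x == 0 then 7 else if x == 7 then 0 else if x == 1 then 2 else if x == 2 then 1
  else if x == 3 then 6 else if x == 6 then 3 else if x == 4 then 5 else 4.
Lemma pm_a0 : pmok (fun _ => false) (Fgen qa0 0 0).
Proof. move=> x Hx _; rewrite /qa0; pmt. Qed.

Definition qa1 x := if x == 1 then 7 + 2 * k else if x == 7 + 2 * k then 1 else if x == 0 then 5 else if x == 5 then 0
  else if x == 4 then 6 else if x == 6 then 4 else if x == 2 then 3 else 2.
Lemma pm_a1 : pmok (fun _ => false) (Fgen qa1 (2 * k) (2 * k)).
Proof. move=> x Hx _; rewrite /qa1; pmt. Qed.

Definition cf1 x := x < 6.
Lemma pm1 : pmok cf1 (Fgen (qcov true 0) 0 0).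
Proof. move=> x Hx; rewrite /cf1 /qcov => Hs; pmt. Qed.

Definition cf2 i j x := (x == 6) || (7 + i <= x <= 7 + j).
Lemma pm2 i j : ~~ odd i -> ~~ odd j -> i < j -> j <= 2 * k -> pmok (cf2 i j) (Fgen (qcov true 0) i j).
Proof. move=> Hi Hj Hij Hjk x Hx; rewrite /cf2 /qcov => Hs; pmt. Qed.

Definition q3 x := if x == 4 then 5 else 4.
Definition cf3 j x := (x < 4) || (x == 6) || (7 <= x <= 7 + j).
Lemma pm3 j : ~~ odd j -> j <= 2 * k -> pmok (cf3 j) (Fgen q3 0 j).
Proof. move=> Hj Hjk x Hx; rewrite /cf3 /q3 => Hs; pmt. Qed.

Definition q4 x := if x == 1 then 2 else 1.
Definition cf4 j x := (x == 0) || (3 <= x <= 6) || (7 <= x <= 7 + j).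
Lemma pm4 j : ~~ odd j -> j <= 2 * k -> pmok (cf4 j) (Fgen q4 0 j).
Proof. move=> Hj Hjk x Hx; rewrite /cf4 /q4 => Hs; pmt. Qed.

Definition q5 x := if x == 0 then 5 else 0.
Definition cf5 i x := (1 <= x <= 4) || (x == 6) || (7 + i <= x).
Lemma pm5 i : ~~ odd i -> i <= 2 * k -> pmok (cf5 i) (Fgen q5 i (2 * k)).
Proof. move=> Hi Hik x Hx; rewrite /cf5 /q5 => Hs; pmt. Qed.

Definition q6 x := if x == 2 then 3 else 2.
Definition cf6 i x := (x <= 1) || (4 <= x <= 6) || (7 + i <= x).
Lemma pm6 i : ~~ odd i -> i <= 2 * k -> pmok (cf6 i) (Fgen q6 i (2 * k)).
Proof. move=> Hi Hik x Hx; rewrite /cf6 /q6 => Hs; pmt. Qed.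

Lemma pm7 : pmok (fun _ => true) id.
Proof. by []. Qed.

Lemma nbr0 y : En 0 y -> y = 1 \/ y = 5 \/ y = 7.
Proof. move/En_cases => He; endestr He; lia. Qed.
Lemma nbr1 y : En 1 y -> y = 0 \/ y = 2 \/ y = 7 + 2 * k.
Proof. move/En_cases => He; endestr He; lia. Qed.
Lemma nbr2 y : En 2 y -> y = 1 \/ y = 3.
Proof. move/En_cases => He; endestr He; lia. Qed.
Lemma nbr3 y : En 3 y -> y = 2 \/ y = 4 \/ y = 6.
Proof. move/En_cases => He; endestr He; lia. Qed.
Lemma nbr4 y : En 4 y -> y = 3 \/ y = 5 \/ y = 6.
Proof. move/En_cases => He; endestr He; lia. Qed.
Lemma nbr5 y : En 5 y -> y = 4 \/ y = 0.
Proof. move/En_cases => He; endestr He; lia. Qed.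
Lemma nbr6 y : En 6 y -> y = 3 \/ y = 4 \/ (7 <= y /\ ~~ odd (y - 7)).
Proof. move/En_cases => He; endestr He; lia. Qed.
Lemma nbrp t y : En (7 + t) y ->
  y = 8 + t \/ (y = 6 + t /\ 0 < t) \/ (y = 6 /\ ~~ odd t) \/ (y = 0 /\ t = 0) \/ (y = 1 /\ t = 2 * k).
Proof. move/En_cases => He; endestr He; lia. Qed.
End Hexa.

Lemma par_path (T : eqType) (f : T -> T) (c : T -> bool) x q y :
  fpath f x (rcons q y) -> odd (count (fun z => c z != c (f z)) (x :: q)) = (c x != c y).
Proof.
elim: q x => [|b q IH] x /=; first by rewrite andbT => /eqP ->; rewrite addn0; case: (c x != c y).
case/andP => /eqP fx /IH; rewrite /= in IH * => H; rewrite oddD H fx.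
by case: (c x); case: (c b); case: (c y).
Qed.

Lemma path_closed (T : eqType) (f : T -> T) (P : pred T) x p :
  (forall z, P z -> P (f z)) -> P x -> path (frel f) x p -> P (last x p).
Proof.
move=> H; elim: p x => [|b p IH] x //= Px /andP [/eqP fx Hp].
by apply: IH => //; rewrite -fx H.
Qed.

Lemma count_excl (T : Type) (A B : pred T) s : (forall z, ~~ (A z && B z)) ->
  count (fun z => A z || B z) s = count A s + count B s.
Proof.
move=> H; elim: s => //= z s ->; have := H z.
by case: (A z); case: (B z) => //= _; lia.
Qed.

Section Cyc.
Variable k : nat.
Notation N := (2 * k + 8).
Variable s : seq 'I_N.
Hypotheses (Us : uniq s) (Ss : 2 < size s) (Cs : cycle (@hexa k) s) (Es : ~~ odd (size s)).

Definition inV x := (x < N) && (vI k x \in s).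
Definition nxt x := val (next s (vI k x)).
Definition prv x := val (prev s (vI k x)).

Lemma inV_lt x : inV x -> x < N. Proof. by case/andP. Qed.
Lemma inVE (z : 'I_N) : inV z = (z \in s). Proof. by rewrite /inV ltn_ord vIK. Qed.

Lemma nxtV x : inV x -> inV (nxt x).
Proof. by case/andP => _ H; rewrite /nxt inVE mem_next. Qed.
Lemma prvV x : inV x -> inV (prv x).
Proof. by case/andP => _ H; rewrite /prv inVE mem_prev. Qed.
Lemma nxtE x : inV x -> En k x (nxt x).
Proof. case/andP => H1 H2; have := next_cycle Cs H2; by rewrite /hexa vIE. Qed.
Lemma prvE x : inV x -> En k (prv x) x.
Proof. case/andP => H1 H2; have := prev_cycle Cs H2; by rewrite /hexa vIE. Qed.
Lemma nxt_prv x : inV x -> nxt (prv x) = x.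
Proof. by case/andP => H1 H2; rewrite /nxt /prv vIK next_prev // vIE. Qed.
Lemma prv_nxt x : inV x -> prv (nxt x) = x.
Proof. by case/andP => H1 H2; rewrite /nxt /prv vIK prev_next // vIE. Qed.

Lemma fc : fcycle (next s) s. Proof. exact: cycle_next. Qed.

Lemma nxt_prv_neq x : inV x -> nxt x != prv x.
Proof.
case/andP => H1 H2; apply/negP => /eqP /val_inj Heq.
set a := vI k x in H2 Heq; set b := next s a.
have nb : next s b = a by rewrite /b Heq next_prev.
have sub : {subset s <= [:: a; b]}.
  move=> y ys; have := fconnect_cycle fc H2 y; rewrite ys => /connectP [p Hp ->].
  have := @path_closed _ (next s) (fun z => z \in [:: a; b]) a p; apply => //; last by rewrite !inE eqxx.
  by move=> z; rewrite !inE => /orP [/eqP ->|/eqP ->]; rewrite ?nb eqxx ?orbT.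
by have := uniq_leq_size Us sub; rewrite /=; lia.
Qed.

Definition u x y := inV x && ((nxt x == y) || (prv x == y)).

Lemma u_sym x y : u x y -> u y x.
Proof.
case/andP => Vx /orP [/eqP <-|/eqP <-]; rewrite /u ?nxtV ?prvV //=.
  by rewrite prv_nxt // eqxx orbT.
by rewrite nxt_prv // eqxx.
Qed.
Lemma u_V x y : u x y -> inV x /\ inV y.
Proof. by case/andP => Vx /orP [/eqP <-|/eqP <-]; split; rewrite ?nxtV ?prvV. Qed.
Lemma u_E x y : u x y -> En k x y.
Proof.
case/andP => Vx /orP [/eqP <-|/eqP <-]; first exact: nxtE.
by have := prvE Vx; rewrite /En orbC.
Qed.
Lemma u_nxt x : inV x -> u x (nxt x). Proof. by move=> H; rewrite /u H eqxx. Qed.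
Lemma u_prv x : inV x -> u x (prv x). Proof. by move=> H; rewrite /u H eqxx orbT. Qed.

Lemma u_forced x a b : inV x -> a != b ->
  (forall y, En k x y -> inV y -> y = a \/ y = b) -> u x a /\ u x b.
Proof.
move=> Vx ab H.
have n1 := H _ (nxtE Vx) (nxtV Vx).
have : En k x (prv x) by have := prvE Vx; rewrite /En orbC.
move=> /H - /(_ (prvV Vx)) n2; have d := nxt_prv_neq Vx.
case: n1 => e1; case: n2 => e2; move: d; rewrite /u Vx e1 e2 ?eqxx //= ?orbT //.
Qed.

Lemma u_third x a b c : u x a -> u x b -> a != b -> u x c -> c = a \/ c = b.
Proof.
rewrite /u => /andP [_ Ha] /andP [_ Hb] ab /andP [_ Hc].
lia.
Qed.

Lemma u_lonely x a : inV x -> (forall y, u x y -> y = a) -> False.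
Proof.
move=> Vx H; have := nxt_prv_neq Vx.
by rewrite (H _ (u_nxt Vx)) (H _ (u_prv Vx)) eqxx.
Qed.

Lemma cutEE (P : pred nat) x y : inV x -> P x -> inV y -> ~~ P y ->
  exists z, [/\ inV z, P z & ~~ P (nxt z)].
Proof.
move=> Vx Px Vy Py.
case: (boolP [exists z : 'I_N, [&& z \in s, P z & ~~ P (nxt z)]]).
  by case/existsP => z /and3P [H1 H2 H3]; exists z; rewrite inVE.
rewrite negb_exists => /forallP H.
have cl : forall z, (z \in s) && P z -> (next s z \in s) && P (next s z).
  move=> z /andP [zs Pz]; rewrite mem_next zs /=; have := H z.
  by rewrite zs Pz /= negbK /nxt vIK.
case/andP: Vx => Hx xs; case/andP: Vy => Hy ys.
have := fconnect_cycle fc xs (vI k y); rewrite ys => /connectP [p Hp Hl].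
have := path_closed cl _ Hp; rewrite -Hl xs vIE // vIE // (negbTE Py) andbF.
by move/(_ Px).
Qed.


Lemma par_even (c : nat -> bool) : ~~ odd (count (fun z : 'I_N => c z == c (nxt z)) s).
Proof.
have H1 := count_predC (fun z : 'I_N => c z == c (nxt z)) s.
have H2 : ~~ odd (count (predC (fun z : 'I_N => c z == c (nxt z))) s).
  case Ds: s Ss => [|x q] // _.
  have Hp : fpath (next s) x (rcons q x) by have := fc; rewrite [X in cycle _ X]Ds.
  have Ho := par_path (fun z : 'I_N => c z) Hp; rewrite eqxx /= in Ho.
  have -> : count (predC (fun z : 'I_N => c z == c (nxt z))) (x :: q) =
     count (fun z : 'I_N => c z != c (next s z)) (x :: q).
    by apply: eq_count => z /=; rewrite /nxt vIK.
  by rewrite Ho.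
move: H1 H2 Es; lia.
Qed.

Lemma cnt1 a b : a < N -> count (fun z : 'I_N => (val z == a) && (nxt z == b)) s = inV a && (nxt a == b).
Proof.
move=> Ha; rewrite (@eq_count _ _ (fun z : 'I_N => (z == vI k a) && (nxt a == b))); last first.
  move=> z /=; case: (z =P vI k a) => [->|H]; rewrite ?vIE ?eqxx //=.
  case: (val z =P a) => // Hz; case: H; apply: val_inj; by rewrite vIE.
case: (nxt a == b); rewrite ?andbT ?andbF.
  rewrite /inV Ha /= -(count_uniq_mem (vI k a) Us).
  by apply: eq_count => z /=; rewrite andbT.
by rewrite (@eq_count _ _ pred0) ?count_pred0 // => z /=; rewrite andbF.
Qed.

Lemma uv a b : a < N -> b < N -> (inV a && (nxt a == b)) + (inV b && (nxt b == a)) = u a b.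
Proof.
move=> Ha Hb; rewrite /u.
have F1 : inV b -> nxt b = a -> inV a /\ prv a = b.
  by move=> Vb <-; rewrite nxtV // prv_nxt.
have F2 : inV a -> prv a = b -> inV b /\ nxt b = a.
  by move=> Va <-; rewrite prvV // nxt_prv.
have F3 : inV a -> nxt a = b -> prv b = a.
  by move=> Va <-; rewrite prv_nxt.
have F4 : inV a -> nxt a != prv a by apply: nxt_prv_neq.
move: F1 F2 F3 F4; case: (inV a); case: (inV b) => /= F1 F2 F3 F4; lia.
Qed.

Lemma par_gen (c : nat -> bool) a b a' b' : a < N -> b < N -> a' < N -> b' < N ->
  a != b -> a != a' -> a != b' -> b != a' -> b != b' -> a' != b' ->
  (forall z : 'I_N, z \in s -> (c z == c (nxt z)) =
     [|| (val z == a) && (nxt z == b), (val z == b) && (nxt z == a),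
         (val z == a') && (nxt z == b') | (val z == b') && (nxt z == a')]) ->
  u a b = u a' b'.
Proof.
move=> Ha Hb Ha' Hb' d1 d2 d3 d4 d5 d6 H; have := par_even c.
rewrite (eq_in_count H) !count_excl; first last.
- by move=> z; apply/negP; lia.
- by move=> z; apply/negP; lia.
- by move=> z; apply/negP; lia.
rewrite !cnt1 // addnA uv // uv //.
by case: (u a b); case: (u a' b').
Qed.

Definition c1 v := if v < 6 then odd v else if v == 6 then true else odd (v - 7).
Definition c2 v := if v < 6 then odd v else if v == 6 then false else ~~ odd (v - 7).

Lemma par1 : u 6 3 = u 0 7.
Proof.
apply: (par_gen (c := c1)); try lia.
move=> z zs.
have He : En k z (nxt z) by apply: nxtE; rewrite inVE.
have Hw : nxt z < N by rewrite /nxt ltn_ord.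
have Hv := ltn_ord z.
rewrite /c1; move: He Hw Hv; change (nat_of_ord z) with (val z).
move: (nxt z) (val z) => w v /En_cases He Hw Hv.
endestr He; ifs; apply/idP/idP => ?; lia.
Qed.

Lemma par2 : u 6 4 = u 1 (7 + 2 * k).
Proof.
apply: (par_gen (c := c2)); try lia.
move=> z zs.
have He : En k z (nxt z) by apply: nxtE; rewrite inVE.
have Hw : nxt z < N by rewrite /nxt ltn_ord.
have Hv := ltn_ord z.
rewrite /c2; move: He Hw Hv; change (nat_of_ord z) with (val z).
move: (nxt z) (val z) => w v /En_cases He Hw Hv.
endestr He; ifs; apply/idP/idP => ?; lia.
Qed.



Lemma no2 x y : inV x -> nxt x = y -> nxt y = x -> False.
Proof.
move=> Vx Hxy Hyx.
have Vy : inV y by rewrite -Hxy nxtV.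
have Hp : prv x = y by rewrite -Hyx prv_nxt.
by have := nxt_prv_neq Vx; rewrite Hp Hxy eqxx.
Qed.

Lemma nogap a c b : a < c < b -> inV (7 + a) -> inV (7 + b) -> ~~ inV (7 + c) -> False.
Proof.
move=> Hacb Va Vb Vc.
have cN : 7 + c < N by have := inV_lt Vb; lia.
pose L x := (7 <= x) && (x < 7 + c).
pose R x := 7 + c < x.
have La : L (7 + a) by rewrite /L; lia.
have Lb : ~~ L (7 + b) by rewrite /L; lia.
have Ra : ~~ R (7 + a) by rewrite /R; lia.
have Rb : R (7 + b) by rewrite /R; lia.
have [z1 [V1 L1 L1']] := cutEE Va La Vb Lb.
have La' : ~~ predC L (7 + a) by rewrite /= negbK.
have [z2 [V2 L2 L2']] := cutEE (P := predC L) Vb Lb Va La'.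
have [z3 [V3 R3 R3']] := cutEE Vb Rb Va Ra.
have Rb' : ~~ predC R (7 + b) by rewrite /= negbK.
have [z4 [V4 R4 R4']] := cutEE (P := predC R) Va Ra Vb Rb'.
have nc : forall z, inV z -> (nxt z != 7 + c) && (z != 7 + c).
  move=> z Vz; apply/andP; split; first by apply: contra Vc => /eqP <-; apply: nxtV.
  by apply: contra Vc => /eqP <-.
have E1 : (inV 0 /\ prv 0 = 7 /\ nxt 7 = 0 /\ inV 7) \/ (inV 6 /\ 7 <= prv 6 < 7 + c).
  have := nc _ V1; move: L1 L1'; rewrite /L => L1 L1' nc1.
  have [[H1 H2]|H] : (z1 = 7 /\ nxt z1 = 0) \/ nxt z1 = 6 by have He := En_cases (nxtE V1); clear -He L1 L1' nc1 cN; endestr He; lia.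
    subst z1; left; have := nxtV V1; have := prv_nxt V1; rewrite H2 => ? ?; by repeat split.
  right; have := nxtV V1; have := prv_nxt V1; rewrite H => P1 P2; split => //; clear -P1 L1; lia.
have E2 : (inV 0 /\ nxt 0 = 7) \/ (inV 6 /\ 7 <= nxt 6 < 7 + c).
  have := nc _ V2; move: L2 L2'; rewrite /= /L => L2 L2' nc1.
  have [[H1 H2]|H] : (z2 = 0 /\ nxt z2 = 7) \/ z2 = 6 by have He := En_cases (nxtE V2); clear -He L2 L2' nc1 cN; endestr He; lia.
    by subst z2; left.
  by subst z2; right; split => //; clear -L2'; lia.
have E3 : (inV 1 /\ prv 1 = 7 + 2 * k /\ nxt (7 + 2 * k) = 1 /\ inV (7 + 2 * k)) \/ (inV 6 /\ 7 + c < prv 6).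
  have := nc _ V3; have := inV_lt (nxtV V3); have := inV_lt V3.
  move: R3 R3'; rewrite /R => R3 R3' l1 l2 nc1.
  have [[H1 H2]|H] : (z3 = 7 + 2 * k /\ nxt z3 = 1) \/ nxt z3 = 6 by have He := En_cases (nxtE V3); clear -He R3 R3' nc1 l1 l2 cN; endestr He; lia.
    subst z3; left; have := nxtV V3; have := prv_nxt V3; rewrite H2 => ? ?; by repeat split.
  right; have := nxtV V3; have := prv_nxt V3; rewrite H => P1 P2; split => //; clear -P1 R3; lia.
have E4 : (inV 1 /\ nxt 1 = 7 + 2 * k) \/ (inV 6 /\ 7 + c < nxt 6).
  have := nc _ V4; have := inV_lt (nxtV V4); have := inV_lt V4.
  move: R4 R4'; rewrite /= /R => R4 R4' l1 l2 nc1.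
  have [[H1 H2]|H] : (z4 = 1 /\ nxt z4 = 7 + 2 * k) \/ z4 = 6 by have He := En_cases (nxtE V4); clear -He R4 R4' nc1 l1 l2 cN; endestr He; lia.
    by subst z4; left.
  by subst z4; right; split => //; clear -R4'; lia.
have n1 : inV 7 -> nxt 7 = 0 -> nxt 0 = 7 -> False by apply: no2.
have n2 : inV 1 -> nxt 1 = 7 + 2 * k -> nxt (7 + 2 * k) = 1 -> False by apply: no2.
have P : u 0 7 -> u 6 3 by rewrite par1.
move: P; rewrite /u => P; clear -P n1 n2 E1 E2 E3 E4; lia.
Qed.



Lemma uVy x y : u x y -> inV y. Proof. by case/u_V. Qed.
Lemma uVx x y : u x y -> inV x. Proof. by case/u_V. Qed.

Lemma u_other x a : inV x -> exists y, u x y /\ y != a.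
Proof.
move=> Vx; have := nxt_prv_neq Vx; case: (nxt x =P a) => [Ha|Ha] H.
  by exists (prv x); split; [apply: u_prv | rewrite -Ha eq_sym].
by exists (nxt x); split; [apply: u_nxt | apply/eqP].
Qed.

Lemma force2 x a b : inV x -> a != b -> (forall y, En k x y -> inV y -> y = a \/ y = b) -> inV a /\ inV b.
Proof. by move=> Vx ab H; have [/uVy ? /uVy ?] := u_forced Vx ab H. Qed.

Lemma ne_inV x y : inV x -> ~~ inV y -> x != y.
Proof. by move=> H1 H2; apply: contraNneq H2 => <-. Qed.

Lemma caseA : (forall t, ~~ inV (7 + t)) -> forall x, x < N -> inV x = cf1 x.
Proof.
move=> Hp.
have np : forall y, 7 <= y -> ~~ inV y by move=> y Hy; rewrite -(subnKC Hy) Hp.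
have A0 : ~~ u 0 7 by apply/negP => /uVy; apply/negP; apply: np.
have A1 : ~~ u 1 (7 + 2 * k) by apply/negP => /uVy; apply/negP; apply: np; lia.
have H3 : ~~ u 6 3 by rewrite par1.
have H4 : ~~ u 6 4 by rewrite par2.
have h6 : ~~ inV 6.
  apply/negP => V6; apply: (u_lonely (a := 0) V6) => y Hy; exfalso.
  case: (nbr6 (u_E Hy)) => [Hy3|[Hy4|[Hy7 _]]].
  - by subst y; rewrite Hy in H3.
  - by subst y; rewrite Hy in H4.
  - by have := np _ Hy7; rewrite (uVy Hy).
have v0 : inV 0 -> inV 1 /\ inV 5.
  move=> V; apply: (force2 (x := 0)) => // y /nbr0 [->|[->|->]] Vy; auto; by rewrite (negbTE (np 7 _)) in Vy.
have v1 : inV 1 -> inV 2 /\ inV 0.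
  move=> V; apply: (force2 (x := 1)) => // y /nbr1 [->|[->|->]] Vy; auto; by rewrite (negbTE (np (7 + 2 * k) _)) in Vy.
have v2 : inV 2 -> inV 3 /\ inV 1.
  move=> V; apply: (force2 (x := 2)) => // y /nbr2 [->|->] Vy; auto.
have v3 : inV 3 -> inV 4 /\ inV 2.
  move=> V; apply: (force2 (x := 3)) => // y /nbr3 [->|[->|->]] Vy; auto; by rewrite (negbTE h6) in Vy.
have v4 : inV 4 -> inV 5 /\ inV 3.
  move=> V; apply: (force2 (x := 4)) => // y /nbr4 [->|[->|->]] Vy; auto; by rewrite (negbTE h6) in Vy.
have v5 : inV 5 -> inV 0 /\ inV 4.
  move=> V; apply: (force2 (x := 5)) => // y /nbr5 [->|->] Vy; auto.
have all6 : inV 0 /\ inV 1 /\ inV 2 /\ inV 3 /\ inV 4 /\ inV 5.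
  case Ds: s Ss => [|z q] // _.
  have Vz : inV z by rewrite inVE Ds mem_head.
  have zl : (z : nat) < 6.
    case: (ltnP z 6) => // H; case: (z =P 6 :> nat) => [H6|H6]; first by rewrite H6 (negbTE h6) in Vz.
    have : 7 <= z by clear -H H6; lia.
    by move/np; rewrite Vz.
  have : inV 0 \/ inV 1 \/ inV 2 \/ inV 3 \/ inV 4 \/ inV 5.
    have zc : (z : nat) = 0 \/ (z : nat) = 1 \/ (z : nat) = 2 \/ (z : nat) = 3 \/ (z : nat) = 4 \/ (z : nat) = 5 by clear -zl; lia.
    by move: Vz; case: zc => [->|[->|[->|[->|[->|->]]]]]; auto 6.
  clear -v0 v1 v2 v3 v4 v5; intuition.
move=> x Hx; rewrite /cf1; case: (ltnP x 6) => Hx6.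
  have : x = 0 \/ x = 1 \/ x = 2 \/ x = 3 \/ x = 4 \/ x = 5 by clear -Hx6; lia.
  case: all6 => [? [? [? [? [? ?]]]]]; by case=> [->|[->|[->|[->|[->|->]]]]].
case: (x =P 6) => [->|H6]; first exact: negbTE.
by apply: negbTE; apply: np; clear -Hx6 H6; lia.
Qed.

Lemma check (cf : nat -> bool) i j : (forall t, inV (7 + t) = (i <= t <= j)) ->
  (forall t, t <= 2 * k -> cf (7 + t) = (i <= t <= j)) ->
  inV 0 = cf 0 -> inV 1 = cf 1 -> inV 2 = cf 2 -> inV 3 = cf 3 -> inV 4 = cf 4 -> inV 5 = cf 5 -> inV 6 = cf 6 ->
  forall x, x < N -> inV x = cf x.
Proof.
move=> H1 H2 e0 e1 e2 e3 e4 e5 e6 x Hx.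
case: (ltnP x 7) => H7.
  have : x = 0 \/ x = 1 \/ x = 2 \/ x = 3 \/ x = 4 \/ x = 5 \/ x = 6 by clear -H7; lia.
  by case=> [->|[->|[->|[->|[->|[->|->]]]]]].
by rewrite -(subnKC H7) H1 H2 //; clear -Hx H7; lia.
Qed.

Lemma caseB t0 : inV (7 + t0) -> exists cf, (forall x, x < N -> inV x = cf x) /\ exists F, pmok k cf F.
Proof.
move=> V0.
have pex : exists t, (fun t => inV (7 + t)) t by exists t0.
have ub : forall t, (fun t => inV (7 + t)) t -> t <= 2 * k by move=> t /inV_lt; lia.
case: (ex_minnP pex) => i /= Vi Hi.
case: (ex_maxnP pex ub) => j /= Vj Hj.
have ij : i <= j by apply: Hi.
have jk : j <= 2 * k by apply: ub.
have intv : forall t, inV (7 + t) = (i <= t <= j).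
  move=> t; apply/idP/idP => [Vt|/andP [H1 H2]]; first by rewrite Hi // Hj.
  case: (boolP (inV (7 + t))) => // Vt; exfalso.
  case: (i =P t) => [Eit|Nit]; first by rewrite -Eit Vi in Vt.
  case: (j =P t) => [Ejt|Njt]; first by rewrite -Ejt Vj in Vt.
  by apply: (@nogap i t j) => //; clear -H1 H2 Nit Njt; lia.
have nV : forall t, ~~ (i <= t <= j) -> ~~ inV (7 + t) by move=> t; rewrite intv.
have ie : ~~ odd i.
  apply/negP => oi.
  have ne : 6 + i != 8 + i by clear; lia.
  have [Va _] : inV (6 + i) /\ inV (8 + i).
    by apply: (force2 Vi ne) => y /nbrp H _; clear -H oi; lia.
  have := Hi (i - 1); rewrite (_ : 7 + (i - 1) = 6 + i) ?Va; last by clear -oi; lia.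
  by move/(_ isT); clear -oi; lia.
have je : ~~ odd j.
  apply/negP => oj.
  have ne : 6 + j != 8 + j by clear; lia.
  have [_ Vb] : inV (6 + j) /\ inV (8 + j).
    by apply: (force2 Vj ne) => y /nbrp H _; clear -H oj jk; lia.
  have := Hj (j + 1); rewrite (_ : 7 + (j + 1) = 8 + j) ?Vb; last by clear; lia.
  by move/(_ isT); clear; lia.
have intn : forall t, i < t < j -> ~~ u (7 + t) 6.
  move=> t Ht; apply/negP => U.
  case: (boolP (odd t)) => ot.
    by have := nbrp (u_E U); clear -ot; lia.
  have V1 : inV (6 + t) by rewrite (_ : 6 + t = 7 + (t - 1)) ?intv; clear -Ht; lia.
  have V2 : inV (8 + t) by rewrite (_ : 8 + t = 7 + (t + 1)) ?intv; clear -Ht jk; lia.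
  have ne1 : 7 + t != 5 + t by clear; lia.
  have [U1 _] : u (6 + t) (7 + t) /\ u (6 + t) (5 + t).
    apply: (u_forced V1 ne1) => y; rewrite (_ : 6 + t = 7 + (t - 1)); last by clear -Ht; lia.
    by move=> /nbrp H _; clear -H Ht ot jk; lia.
  have ne2 : 7 + t != 9 + t by clear; lia.
  have [U2 _] : u (8 + t) (7 + t) /\ u (8 + t) (9 + t).
    apply: (u_forced V2 ne2) => y; rewrite (_ : 8 + t = 7 + (t + 1)); last by clear; lia.
    by move=> /nbrp H _; clear -H Ht ot jk; lia.
  have ne3 : 6 + t != 8 + t by clear; lia.
  have := u_third (u_sym U1) (u_sym U2) ne3 U.
  by clear -Ht; lia.
have hN : forall y, u 6 y -> [\/ y = 3, y = 4, y = 7 + i | y = 7 + j].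
  move=> y U; case: (nbr6 (u_E U)) => [->|[->|[H1 H2]]]; [by constructor 1|by constructor 2|].
  have Vy := uVy U.
  have : inV (7 + (y - 7)) by rewrite (_ : 7 + (y - 7) = y) //; clear -H1; lia.
  rewrite intv => /andP [Hy1 Hy2].
  case: (i =P y - 7) => [E1|N1]; first by constructor 3; clear -E1 H1; lia.
  case: (j =P y - 7) => [E2|N2]; first by constructor 4; clear -E2 H1; lia.
  have := intn (y - 7); rewrite (_ : 7 + (y - 7) = y); last by clear -H1; lia.
  rewrite (u_sym U) => /(_ _) //; clear -Hy1 Hy2 N1 N2; lia.
have candi : forall y, u (7 + i) y -> y = 6 \/ (y = 0 /\ i = 0) \/ (y = 1 /\ i = 2 * k) \/ (y = 8 + i /\ i < j).
  move=> y U; have Vy := uVy U; case: (nbrp (u_E U)) => [E|[[E1 E2]|H]].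
  - subst y; have : inV (7 + (i + 1)) by rewrite (_ : 7 + (i + 1) = 8 + i) //; clear; lia.
    by rewrite intv; clear; lia.
  - subst y; have : inV (7 + (i - 1)) by rewrite (_ : 7 + (i - 1) = 6 + i) //; clear -E2; lia.
    by rewrite intv; clear -E2; lia.
  - by clear -H; lia.
have candj : forall y, u (7 + j) y -> y = 6 \/ (y = 0 /\ j = 0) \/ (y = 1 /\ j = 2 * k) \/ (y = 6 + j /\ i < j).
  move=> y U; have Vy := uVy U; case: (nbrp (u_E U)) => [E|[[E1 E2]|H]].
  - subst y; have : inV (7 + (j + 1)) by rewrite (_ : 7 + (j + 1) = 8 + j) //; clear; lia.
    by rewrite intv; clear; lia.
  - subst y; have : inV (7 + (j - 1)) by rewrite (_ : 7 + (j - 1) = 6 + j) //; clear -E2; lia.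
    by rewrite intv; clear -E2; lia.
  - by clear -H; lia.
have Xi : u (7 + i) 6 \/ (i = 0 /\ u 0 7).
  have [y1 [U1 N1]] := u_other (8 + i) Vi.
  case: (candi _ U1) => [E|[[E1 E2]|[[E1 E2]|[E1 E2]]]].
  - by left; move: U1; rewrite E.
  - by right; split => //; move: U1; rewrite E1 E2 => /u_sym.
  - have [y2 [U2 N2]] := u_other 1 Vi.
    case: (candi _ U2) => [E|[[E3 E4]|[[E3 E4]|[E3 E4]]]].
    + by left; move: U2; rewrite E.
    + by right; split => //; move: U2; rewrite E3 E4 => /u_sym.
    + by rewrite E3 eqxx in N2.
    + by clear -E2 E4 jk; lia.
  - by rewrite E1 eqxx in N1.
have Xj : u (7 + j) 6 \/ (j = 2 * k /\ u 1 (7 + 2 * k)).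
  have [y1 [U1 N1]] := u_other (6 + j) Vj.
  case: (candj _ U1) => [E|[[E1 E2]|[[E1 E2]|[E1 E2]]]].
  - by left; move: U1; rewrite E.
  - have [y2 [U2 N2]] := u_other 0 Vj.
    case: (candj _ U2) => [E|[[E3 E4]|[[E3 E4]|[E3 E4]]]].
    + by left; move: U2; rewrite E.
    + by rewrite E3 eqxx in N2.
    + by right; split => //; move: U2; rewrite E3 E4 => /u_sym.
    + by clear -E2 E4 ij; lia.
  - by right; split => //; move: U1; rewrite E1 E2 => /u_sym.
  - by rewrite E1 eqxx in N1.
have P1 := par1; have P2 := par2.
have i0 : u 0 7 -> i = 0.
  move/uVy; rewrite (_ : 7 = 7 + 0) // intv; clear; lia.
have j2k : u 1 (7 + 2 * k) -> j = 2 * k.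
  move/uVy; rewrite intv; clear -jk; lia.
have tV : forall t, i <= t <= j -> inV (7 + t) by move=> t; rewrite intv.
case A0: (u 0 7); case A1: (u 1 (7 + 2 * k)).
4: {
  have U63 : ~~ u 6 3 by rewrite P1 A0.
  have U64 : ~~ u 6 4 by rewrite P2 A1.
  have Ui : u (7 + i) 6 by case: Xi => // [[_ H]]; rewrite H in A0.
  have Uj : u (7 + j) 6 by case: Xj => // [[_ H]]; rewrite H in A1.
  have ilj : i < j.
    case: (ltngtP i j) => // Eij; [by move: ij; rewrite leqNgt Eij | exfalso].
    apply: (u_lonely (a := 6) Vi) => y U; case: (candi _ U) => [//|[[E1 E2]|[[E1 E2]|[E1 E2]]]].
    - by move: U A0; rewrite E1 E2 => /u_sym ->.
    - by move: U A1; rewrite E1 E2 => /u_sym ->.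
    - by move: E2; rewrite Eij ltnn.
  have V6 : inV 6 := uVy Ui.
  have nh : forall y, y < 6 -> ~~ inV y.
    move=> y Hy; apply/negP => Vy.
    have Py : ~~ (6 <= y) by rewrite -ltnNge.
    have [z [Vz Pz Pz']] := cutEE (P := fun x => 6 <= x) V6 (leqnn 6) Vy Py.
    have Uz := u_nxt Vz; move: Uz Pz Pz'; move: (nxt z) => w Uz Pz Pz'.
    case: (z =P 6) => [Ez|Nz].
      subst z; case: (hN _ Uz) => Ew; move: Pz'; rewrite Ew; try (clear; lia).
      - by rewrite Ew (negbTE U63) in Uz.
      - by rewrite Ew (negbTE U64) in Uz.
    have Ez : z = 7 + (z - 7) by clear -Pz Nz; lia.
    move: Uz; rewrite Ez => Uz.
    case: (nbrp (u_E Uz)) => [E|[[E _]|[[E _]|[[E1 E2]|[E1 E2]]]]]; move: Pz'; rewrite ?E ?E1; try (clear; lia).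
    - by move: Uz A0; rewrite E1 E2 => /u_sym ->.
    - by move: Uz A1; rewrite E1 E2 => /u_sym ->.
  exists (cf2 i j); split; last by exists (Fgen (qcov true 0) i j); apply: pm2.
  apply: (check intv); try (by rewrite /cf2 => *; clear -jk; lia);
    rewrite /cf2; first [rewrite V6 // | rewrite (negbTE (nh _ _)) //].
}
{
  have U63 : u 6 3 by rewrite P1 A0.
  have U64 : u 6 4 by rewrite P2 A1.
  have Ei := i0 A0; have Ej := j2k A1; subst i j.
  have n34 : 3 != 4 by [].
  have hN2 := u_third U63 U64 n34.
  have W0 := uVx A0; have W1 := uVx A1.
  have [y [U N]] := u_other 7 W0.
  have U05 : u 0 5.
    case: (nbr0 (u_E U)) => [Ey|[Ey|Ey]]; last by rewrite Ey eqxx in N.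
      2: by rewrite -Ey.
    subst y; exfalso.
    have V6 := uVx U63.
    have P0 : (fun x => (7 <= x) || (x <= 1)) 0 by [].
    have P6 : ~~ (fun x => (7 <= x) || (x <= 1)) 6 by [].
    have [z [Vz Pz Pz']] := cutEE (P := fun x => (7 <= x) || (x <= 1)) W0 P0 V6 P6.
    have Uz := u_nxt Vz; move: Uz Pz Pz'; move: (nxt z) => w Uz /= Pz Pz'.
    case: (leqP z 1) => Hz.
      have : z = 0 \/ z = 1 by clear -Hz; lia.
      case=> Ez; subst z.
      - case: (nbr0 (u_E Uz)) => [Ew|[Ew|Ew]]; subst w; try by move: Pz'; clear; lia.
        have n71 : 7 != 1 by [].

        by have := u_third A0 U n71 Uz; clear; lia.
      - case: (nbr1 (u_E Uz)) => [Ew|[Ew|Ew]]; subst w; try by move: Pz'; clear; lia.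
        have n : 0 != 7 + 2 * k by clear; lia.
        by have := u_third (u_sym U) A1 n Uz; clear; lia.
    have Ez : z = 7 + (z - 7) by move: Pz; clear -Hz; lia.
    move: Uz; rewrite Ez => Uz.
    case: (nbrp (u_E Uz)) => [E|[[E Et]|[[E Et]|[[E1 E2]|[E1 E2]]]]].
    - by move: Pz'; rewrite E; clear; lia.
    - by move: Pz'; rewrite E; clear -Et; lia.
    - by move: Uz; rewrite E => /u_sym /hN2; clear; lia.
    - by move: Pz'; rewrite E1; clear; lia.
    - by move: Pz'; rewrite E1; clear; lia.
  have [y' [U' N']] := u_other (7 + 2 * k) W1.
  have U12 : u 1 2.
    case: (nbr1 (u_E U')) => [Ey|[Ey|Ey]]; last by rewrite Ey eqxx in N'.
      2: by rewrite -Ey.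
    subst y'; have n75 : 7 != 5 by [].
    by have := u_third A0 U05 n75 (u_sym U'); clear; lia.
  exists (fun _ => true); split; last by exists id; apply: pm7.
  have := uVy U12; have := uVy U63; have := uVy U64; have := uVy U05; have := uVx U63.
  move=> ? ? ? ? ?.
  apply: (check intv) => //; by move=> t Ht; clear -Ht; lia.
}
{
  have U63 : u 6 3 by rewrite P1 A0.
  have U64 : ~~ u 6 4 by rewrite P2 A1.
  have Ei := i0 A0; subst i.
  have Uj : u (7 + j) 6 by case: Xj => // [[_ H]]; rewrite H in A1.
  have W0 := uVx A0; have V6 := uVx U63; have V3 := uVy U63.
  have [y [U N]] := u_other 7 W0.
  case: (nbr0 (u_E U)) => [Ey|[Ey|Ey]]; last by rewrite Ey eqxx in N.
  - subst y.
    have W1 := uVy U.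
    have [y' [U' N']] := u_other 0 W1.
    have U12 : u 1 2.
      case: (nbr1 (u_E U')) => [Ey|[Ey|Ey]]; first by rewrite Ey eqxx in N'.
        by rewrite -Ey.
      by move: U' A1; rewrite Ey => ->.
    have n5 : ~~ inV 5.
      apply/negP => V5; have n40 : 4 != 0 by [].
      have [_ U50] := u_forced V5 n40 (fun y H _ => nbr5 H).
      have n71 : 7 != 1 by [].
      by have := u_third A0 U n71 (u_sym U50); clear; lia.
    have n4 : ~~ inV 4.
      apply/negP => V4; apply: (u_lonely (a := 3) V4) => y2 U2.
      case: (nbr4 (u_E U2)) => [//|[Ey|Ey]]; subst y2.
      - by rewrite (uVy U2) in n5.
      - by rewrite (u_sym U2) in U64.
    have := uVy U12; move=> ?.
    exists (cf3 j); split; last by exists (Fgen q3 0 j); apply: pm3.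
    apply: (check intv); rewrite /cf3 //=; try (by apply: negbTE); by move=> t Ht; clear -Ht; lia.
  - subst y.
    have V5 := uVy U.
    have n40 : 4 != 0 by [].
    have [U54 _] := u_forced V5 n40 (fun y H _ => nbr5 H).
    have V4 := uVy U54.
    have n1 : ~~ inV 1.
      apply/negP => V1; apply: (u_lonely (a := 2) V1) => y2 U2.
      case: (nbr1 (u_E U2)) => [Ey|[//|Ey]]; subst y2.
      - have n75 : 7 != 5 by [].
        by have := u_third A0 U n75 (u_sym U2); clear; lia.
      - by rewrite U2 in A1.
    have n2 : ~~ inV 2.
      apply/negP => V2; have n13 : 1 != 3 by [].
      have [U21 _] := u_forced V2 n13 (fun y H _ => nbr2 H).
      by rewrite (uVy U21) in n1.
    exists (cf4 j); split; last by exists (Fgen q4 0 j); apply: pm4.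
    apply: (check intv); rewrite /cf4 //=; try (by apply: negbTE); by move=> t Ht; clear -Ht; lia.
}
{
  have U63 : ~~ u 6 3 by rewrite P1 A0.
  have U64 : u 6 4 by rewrite P2 A1.
  have Ej := j2k A1; subst j.
  have Ui : u (7 + i) 6 by case: Xi => // [[_ H]]; rewrite H in A0.
  have W1 := uVx A1; have V6 := uVx U64; have V4 := uVy U64.
  have [y [U N]] := u_other (7 + 2 * k) W1.
  case: (nbr1 (u_E U)) => [Ey|[Ey|Ey]]; last by rewrite Ey eqxx in N.
  - subst y.
    have W0 := uVy U.
    have [y' [U' N']] := u_other 1 W0.
    have U05 : u 0 5.
      case: (nbr0 (u_E U')) => [Ey|[Ey|Ey]]; first by rewrite Ey eqxx in N'.
        by rewrite -Ey.
      by move: U' A0; rewrite Ey => ->.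
    have V5 := uVy U05.
    have n40 : 4 != 0 by [].
    have [U54 _] := u_forced V5 n40 (fun y H _ => nbr5 H).
    have n3 : ~~ inV 3.
      apply/negP => V3; apply: (u_lonely (a := 2) V3) => y2 U2.
      case: (nbr3 (u_E U2)) => [//|[Ey|Ey]]; subst y2.
      - have n65 : 6 != 5 by [].
        by have := u_third (u_sym U64) (u_sym U54) n65 (u_sym U2); clear; lia.
      - by rewrite (u_sym U2) in U63.
    have n2 : ~~ inV 2.
      apply/negP => V2; have n13 : 1 != 3 by [].
      have [_ U23] := u_forced V2 n13 (fun y H _ => nbr2 H).
      by rewrite (uVy U23) in n3.
    exists (cf6 i); split; last by exists (Fgen q6 i (2 * k)); apply: pm6.
    apply: (check intv); rewrite /cf6 //=; try (by apply: negbTE); by move=> t Ht; clear -Ht; lia.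
  - subst y.
    have W2 := uVy U.
    have n13 : 1 != 3 by [].
    have [_ U23] := u_forced W2 n13 (fun y H _ => nbr2 H).
    have V3 := uVy U23.
    have n0 : ~~ inV 0.
      apply/negP => V0'; apply: (u_lonely (a := 5) V0') => y2 U2.
      case: (nbr0 (u_E U2)) => [Ey|[//|Ey]]; subst y2.
      - have n : 7 + 2 * k != 2 by clear; lia.
        by have := u_third A1 U n (u_sym U2); clear; lia.
      - by rewrite U2 in A0.
    have n5 : ~~ inV 5.
      apply/negP => V5; have n40 : 4 != 0 by [].
      have [_ U50] := u_forced V5 n40 (fun y H _ => nbr5 H).
      by rewrite (uVy U50) in n0.
    exists (cf5 i); split; last by exists (Fgen q5 i (2 * k)); apply: pm5.
    apply: (check intv); rewrite /cf5 //=; try (by apply: negbTE); by move=> t Ht; clear -Ht; lia.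
}
Qed.





End Cyc.

Section Final.
Variable k : nat.
Notation N := (2 * k + 8).

Lemma partner_cf (cf : nat -> bool) F : pmok k cf F ->
  partner_on (@hexa k) [set x : 'I_N | ~~ cf x] (fun x : 'I_N => vI k (F x)).
Proof. by move=> H; apply: (partner_nat (inS := fun x => ~~ cf x)). Qed.

Lemma hexa_ext (s : seq 'I_N) : even_cycle (@hexa k) s ->
  exists m, partner_on (@hexa k) (~: [set x in s]) m.
Proof.
case/and4P => Us Ss Cs Es.
have [cf [Hcf [F HF]]] : exists cf, (forall x, x < N -> inV s x = cf x) /\ exists F, pmok k cf F.
  case: (boolP [exists t : 'I_N, inV s (7 + t)]).
    by case/existsP => t Vt; apply: (caseB Us Ss Cs Es Vt).
  rewrite negb_exists => /forallP H.
  exists cf1; split; last by exists (Fgen (qcov true 0) 0 0); apply: pm1.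
  apply: (caseA Us Ss Cs Es) => t; case: (ltnP t N) => Ht.
    by have := H (Ordinal Ht).
  by apply/negP => /inV_lt; clear -Ht; lia.
exists (fun x : 'I_N => vI k (F x)).
have -> : ~: [set x in s] = [set x : 'I_N | ~~ cf x].
  by apply/setP => x; rewrite !inE -inVE Hcf.
exact: partner_cf.
Qed.

Lemma cov_edge x y : x < N -> y < N -> EnP k x y ->
  exists F, pmok k (fun _ => false) F /\ (F x = y \/ F y = x).
Proof.
move=> Hx Hy He; endestr He.
- case: He => [H1 [H2 [E|[E|[[E1 E2]|[E1 E2]]]]]].
  + exists (Fgen (qcov (~~ odd x) 0) 0 0); split; first by apply: pm_cov.
    left; rewrite /Fgen /qcov; ifs; lia.
  + exists (Fgen (qcov (~~ odd y) 0) 0 0); split; first by apply: pm_cov.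
    right; rewrite /Fgen /qcov; ifs; lia.
  + exists (Fgen (qcov false 0) 0 0); split; first by apply: pm_cov.
    left; rewrite /Fgen /qcov; ifs; lia.
  + exists (Fgen (qcov false 0) 0 0); split; first by apply: pm_cov.
    left; rewrite /Fgen /qcov; ifs; lia.
- exists (Fgen (qcov true (y - 7)) (y - 7) (y - 7)); split; first by apply: pm_cov; lia.
  left; rewrite /Fgen /qcov; ifs; lia.
- exists (Fgen (qcov true (x - 7)) (x - 7) (x - 7)); split; first by apply: pm_cov; lia.
  right; rewrite /Fgen /qcov; ifs; lia.
- case: (boolP (odd (x - 7))) => ox.
    exists (Fgen (qcov true 0) 0 0); split; first by apply: pm_cov.
    left; rewrite /Fgen /qcov; ifs; lia.
  exists (Fgen (qcov true (2 * k)) (2 * k) (2 * k)); split; first by apply: pm_cov; lia.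
  left; rewrite /Fgen /qcov; ifs; lia.
- case: (boolP (odd (y - 7))) => ox.
    exists (Fgen (qcov true 0) 0 0); split; first by apply: pm_cov.
    right; rewrite /Fgen /qcov; ifs; lia.
  exists (Fgen (qcov true (2 * k)) (2 * k) (2 * k)); split; first by apply: pm_cov; lia.
  right; rewrite /Fgen /qcov; ifs; lia.
- exists (Fgen (qa1 k) (2 * k) (2 * k)); split; first by apply: pm_a1.
  left; rewrite /Fgen /qa1; ifs; lia.
- exists (Fgen (qa1 k) (2 * k) (2 * k)); split; first by apply: pm_a1.
  right; rewrite /Fgen /qa1; ifs; lia.
- exists (Fgen (qa1 k) (2 * k) (2 * k)); split; first by apply: pm_a1.
  left; rewrite /Fgen /qa1; ifs; lia.
- exists (Fgen (qa1 k) (2 * k) (2 * k)); split; first by apply: pm_a1.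
  right; rewrite /Fgen /qa1; ifs; lia.
- exists (Fgen qa0 0 0); split; first by apply: pm_a0.
  left; rewrite /Fgen /qa0; ifs; lia.
- exists (Fgen qa0 0 0); split; first by apply: pm_a0.
  right; rewrite /Fgen /qa0; ifs; lia.
- exists (Fgen qa0 0 0); split; first by apply: pm_a0.
  left; rewrite /Fgen /qa0; ifs; lia.
- exists (Fgen qa0 0 0); split; first by apply: pm_a0.
  right; rewrite /Fgen /qa0; ifs; lia.
Qed.

Lemma hexa_cov (x y : 'I_N) : @hexa k x y -> exists m, partner_on (@hexa k) setT m /\ m x = y.
Proof.
move=> /En_cases He.
have [F [HF HFxy]] := cov_edge (ltn_ord x) (ltn_ord y) He.
exists (fun z : 'I_N => vI k (F z)).
have HP := partner_cf HF.
have ES : [set z : 'I_N | ~~ (fun _ : nat => false) z] = setT by apply/setP => z; rewrite !inE.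
rewrite ES in HP; split; first exact: HP.
apply: val_inj; have [_ _ _ _ Hy] := HF y (ltn_ord y) isT.
have [Hx1 _ _ _ _] := HF x (ltn_ord x) isT.
rewrite vIE //; case: HFxy => E; first by rewrite E.
by rewrite -E Hy.
Qed.

Lemma ed a b : a < N -> b < N -> En k a b -> connect (@hexa k) (vI k a) (vI k b).
Proof. by move=> Ha Hb H; apply: connect1; rewrite /hexa !vIE. Qed.

Lemma toh a : a < N -> connect (@hexa k) (vI k a) (vI k 6).
Proof.
move=> Ha.
have e : forall a b, a < N -> b < N -> En k a b -> connect (@hexa k) (vI k a) (vI k b) by apply: ed.
have c4 : connect (@hexa k) (vI k 4) (vI k 6) by apply: e; rewrite /En /hexa_edge; lia.
have c3 : connect (@hexa k) (vI k 3) (vI k 6) by apply: e; rewrite /En /hexa_edge; lia.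
have c5 : connect (@hexa k) (vI k 5) (vI k 6).
  by apply: connect_trans c4; apply: e; rewrite /En /hexa_edge; lia.
have c0 : connect (@hexa k) (vI k 0) (vI k 6).
  by apply: connect_trans c5; apply: e; rewrite /En /hexa_edge; lia.
have c1 : connect (@hexa k) (vI k 1) (vI k 6).
  by apply: connect_trans c0; apply: e; rewrite /En /hexa_edge; lia.
have c2 : connect (@hexa k) (vI k 2) (vI k 6).
  by apply: connect_trans c3; apply: e; rewrite /En /hexa_edge; lia.
case: (ltnP a 7) => H7.
  have : a = 0 \/ a = 1 \/ a = 2 \/ a = 3 \/ a = 4 \/ a = 5 \/ a = 6 by lia.
  by case=> [->|[->|[->|[->|[->|[->|->]]]]]].
case: (boolP (odd (a - 7))) => oa.
  apply: (@connect_trans _ _ (vI k (a + 1))); apply: e; rewrite /En /hexa_edge; lia.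
by apply: e; rewrite /En /hexa_edge; lia.
Qed.

Lemma hexa_conn (x y : 'I_N) : connect (@hexa k) x y.
Proof.
have sym : connect_sym (@hexa k).
  by apply: sym_connect_sym => a b; rewrite /hexa orbC.
rewrite -(vIK x) -(vIK y); apply: connect_trans (toh (ltn_ord x)) _.
by rewrite sym; apply: toh.
Qed.
End Final.

Theorem proposition5p15 (T : finType) (e : rel T) :
  in_G3 e -> cycle_extendable e.
Proof.
case=> k [f [[g fK gK] hom]].
apply: (transport fK gK hom).
- exact: hexa_conn.
- exact: hexa_cov.
- exact: hexa_ext.
Qed.
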